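(* For all primes $p$, all integers $m_1,m_2,k$ and all integers $r\ge1$, $$\binom{p^rm_1+p^rm_2-k-1}{p^rm_1}\equiv\binom{p^{r-1}m_1+p^{r-1}m_2-\lfloor k/p\rfloor-1}{p^{r-1}m_1}\pmod{p^r}.$$
   Context: For all integers $n, k$, the binomial coefficient is defined by $\binom{n}{k} = \lim_{z \to 0} \frac{\Gamma(z+n+1)}{\Gamma(z+k+1)\Gamma(z+n-k+1)}$; this is a finite integer for all $n,k\in\mathbb{Z}$, agrees with the usual one for $n\ge0$, and satisfies $\binom{n}{k}=\binom{n}{n-k}$. $\lfloor x\rfloor$ denotes the floor function. *)

(* Defs.v *)
From HB Require Import structures.
From mathcomp Require Import all_boot all_order all_algebra.
Set Implicit Arguments. Unset Strict Implicit. Unset Printing Implicit Defensive.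
Import Order.TTheory GRing.Theory Num.Theory.
Local Open Scope ring_scope.

(* Binomial coefficient for all integers n, k, defined (as in the paper) as
   lim_{z->0} Gamma(z+n+1) / (Gamma(z+k+1) Gamma(z+n-k+1)).
   Evaluating this limit gives the explicit closed form below:
   - n >= 0 : the usual binomial (0 unless 0 <= k <= n);
   - n < 0, k >= 0 : (-1)^k * C(k-n-1, k);
   - n < 0, k <= n : (-1)^(n-k) * C(-k-1, n-k);
   - n < k < 0 : 0. *)
Definition binomZ (n k : int) : int :=
  if 0 <= n then
    (if 0 <= k then ('C((absz (n)%R), (absz (k)%R)))%:Z else 0)
  else if 0 <= k then
    (-1) ^+ (absz (k)%R) * ('C((absz (k - n - 1)%R), (absz (k)%R)))%:Z
  else if k <= n then
    (-1) ^+ (absz (n - k)%R) * ('C((absz (- k - 1)%R), (absz (n - k)%R)))%:Z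
  else 0.

(* Main.v *)
Require Import Defs.
From HB Require Import structures.
From mathcomp Require Import all_boot all_order all_algebra.
From mathcomp Require Import ring lra zify.
Import Order.TTheory GRing.Theory Num.Theory.

Lemma prod_step (F : nat -> nat) (P : pred nat) L :
  \prod_(0 <= j < L.+2 | P j) F j =
  \prod_(0 <= j < L.+1 | P j) F j * (if P L.+1 then F L.+1 else 1).
Proof. by rewrite big_mkcond big_nat_recr //= -big_mkcond. Qed.

Lemma prod_base (F : nat -> nat) p : \prod_(0 <= j < 1 | ~~ (p %| j)) F j = 1.
Proof. by rewrite big_mkcond big_nat1 dvdn0. Qed.

Lemma CL_exact p K L : 0 < p ->
  'C(p * K + L, L) * \prod_(0 <= j < L.+1 | ~~ (p %| j)) j =
  'C(K + L %/ p, L %/ p) * \prod_(0 <= j < L.+1 | ~~ (p %| j)) (p * K + j).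
Proof.
move=> p0; elim: L => [|L IH]; first by rewrite !prod_base addn0 div0n !bin0.
rewrite !prod_step divnS //.
have E : L.+1 * 'C(p * K + L.+1, L.+1) = (p * K + L.+1) * 'C(p * K + L, L).
  by rewrite -mul_bin_diag addnS.
case: (boolP (p %| L.+1)) => /= H.
- rewrite !muln1 add1n.
  have HL : L.+1 = p * (L %/ p).+1.
    by rewrite -{1}(divnK H) divnS // H mulnC.
  set t := L %/ p in HL *.
  have E2 : t.+1 * 'C(K + t.+1, t.+1) = (K + t.+1) * 'C(K + t, t).
    by rewrite -mul_bin_diag addnS.
  have E' : t.+1 * 'C(p * K + L.+1, L.+1) = (K + t.+1) * 'C(p * K + L, L).
    apply/eqP; rewrite -(eqn_pmul2l p0) !mulnA -HL mulnDr -HL; exact/eqP.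
  apply/eqP; rewrite -(eqn_pmul2l (ltn0Sn t)); apply/eqP.
  by rewrite mulnA E' -mulnA IH -/t [RHS]mulnA E2 mulnA.
- rewrite add0n.
  apply/eqP; rewrite -(eqn_pmul2l (ltn0Sn L)); apply/eqP.
  rewrite mulnA E -mulnA (mulnA 'C(p * K + L, L)) IH.
  ring.
Qed.

Lemma CL2_exact p A b : 0 < p ->
  'C(p * A - 1, b) * \prod_(0 <= j < b.+1 | ~~ (p %| j)) j =
  'C(A - 1, b %/ p) * \prod_(0 <= j < b.+1 | ~~ (p %| j)) (p * A - j).
Proof.
move=> p0; elim: b => [|b IH]; first by rewrite !prod_base div0n !bin0.
rewrite !prod_step divnS //.
have E : b.+1 * 'C(p * A - 1, b.+1) = (p * A - b.+1) * 'C(p * A - 1, b).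
  by rewrite mul_bin_left -subnDA add1n.
case: (boolP (p %| b.+1)) => /= H.
- rewrite !muln1 add1n.
  have HL : b.+1 = p * (b %/ p).+1.
    by rewrite -{1}(divnK H) divnS // H mulnC.
  set t := b %/ p in HL *.
  have E2 : t.+1 * 'C(A - 1, t.+1) = (A - t.+1) * 'C(A - 1, t).
    by rewrite mul_bin_left -subnDA add1n.
  have E' : t.+1 * 'C(p * A - 1, b.+1) = (A - t.+1) * 'C(p * A - 1, b).
    apply/eqP; rewrite -(eqn_pmul2l p0) !mulnA -HL mulnBr -HL; exact/eqP.
  apply/eqP; rewrite -(eqn_pmul2l (ltn0Sn t)); apply/eqP.
  by rewrite mulnA E' -mulnA IH -/t [RHS]mulnA E2 mulnA.
- rewrite add0n.
  apply/eqP; rewrite -(eqn_pmul2l (ltn0Sn b)); apply/eqP.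
  rewrite mulnA E -mulnA (mulnA 'C(p * A - 1, b)) IH.
  ring.
Qed.

Local Open Scope ring_scope.

Lemma nat_modz (m n d : nat) : (m = n %[mod d])%N -> (m%:Z = n%:Z %[mod d%:Z])%Z.
Proof. by move=> h; rewrite !modz_nat h. Qed.

Lemma modz_mul_cong (d x y u v : int) :
  (x = y %[mod d])%Z -> (u = v %[mod d])%Z -> (x * u = y * v %[mod d])%Z.
Proof. by move=> h1 h2; rewrite -modzMm h1 h2 modzMm. Qed.

Lemma cancel_modz (d Q : nat) (x y : int) : coprime Q d ->
  (x * Q%:Z = y * Q%:Z %[mod d%:Z])%Z -> (x = y %[mod d%:Z])%Z.
Proof.
move=> cQ /eqP; rewrite eqz_mod_dvd -mulrBl Gauss_dvdzl => [h|].
  by apply/eqP; rewrite eqz_mod_dvd.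
by rewrite coprimezE /= coprime_sym.
Qed.

Lemma prod_coprime p b : prime p ->
  coprime (\prod_(0 <= j < b.+1 | ~~ (p %| j)%N) j)%N p.
Proof.
move=> pp; apply: (big_ind (fun x => coprime x p)); first exact: coprime1n.
- by move=> x y hx hy; rewrite coprimeMl hx hy.
- by move=> j hj; rewrite coprime_sym prime_coprime.
Qed.

Lemma CL_mod p r K L : prime p -> (p ^ r %| p * K)%N ->
  ('C(p * K + L, L)%:Z = 'C(K + L %/ p, L %/ p)%:Z %[mod (p ^ r)%N%:Z])%Z.
Proof.
move=> pp hd; have p0 := prime_gt0 pp.
apply: (@cancel_modz _ (\prod_(0 <= j < L.+1 | ~~ (p %| j)%N) j)%N).
  by apply: coprimeXr; apply: prod_coprime.
rewrite -!PoszM CL_exact //; apply: nat_modz.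
suff hP : (\prod_(0 <= j < L.+1 | ~~ (p %| j)%N) (p * K + j) =
   \prod_(0 <= j < L.+1 | ~~ (p %| j)%N) j %[mod p ^ r])%N.
  by rewrite -modnMmr hP modnMmr.
apply: (big_ind2 (fun x y => x = y %[mod p ^ r])%N) => //.
- by move=> x1 x2 y1 y2 h1 h2; rewrite -modnMm h1 h2 modnMm.
- by move=> j _; rewrite -(divnK hd) modnMDl.
Qed.

Lemma prod_neg p r A b : (0 < p)%N -> (p ^ r %| p * A)%N -> (b < p * A)%N ->
  ((\prod_(0 <= j < b.+1 | ~~ (p %| j)%N) (p * A - j))%N%:Z =
   (-1) ^+ (b - b %/ p) * (\prod_(0 <= j < b.+1 | ~~ (p %| j)%N) j)%N%:Z
   %[mod (p ^ r)%N%:Z])%Z.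
Proof.
move=> p0 hd; elim: b => [|b IH] hb; first by rewrite !prod_base div0n mul1r.
have IH' := IH (ltnW hb).
rewrite !prod_step divnS //.
case: (boolP (p %| b.+1)%N) => /= H.
  by rewrite !muln1 add1n subSS.
rewrite add0n subSn ?leq_div // !PoszM -subzn ?(ltnW hb) //.
set X := Posz (\prod_(_ <= _ < _ | _) _)%N.
set Y := Posz (\prod_(_ <= _ < _ | _) _)%N.
rewrite (_ : (-1) ^+ (b - b %/ p).+1 * (Y * b.+1%:Z) =
   ((-1) ^+ (b - b %/ p) * Y) * (- b.+1%:Z)); last by rewrite exprS; ring.
apply: modz_mul_cong => //.
by rewrite -(divnK hd) PoszM modzMDl.
Qed.

Lemma CL2_mod p r A b : prime p -> (p ^ r %| p * A)%N -> (b < p * A)%N ->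
  ('C(p * A - 1, b)%:Z = (-1) ^+ (b - b %/ p) * 'C(A - 1, b %/ p)%:Z
   %[mod (p ^ r)%N%:Z])%Z.
Proof.
move=> pp hd hb; have p0 := prime_gt0 pp.
apply: (@cancel_modz _ (\prod_(0 <= j < b.+1 | ~~ (p %| j)%N) j)%N).
  by apply: coprimeXr; apply: prod_coprime.
rewrite -PoszM CL2_exact // PoszM.
set Y := Posz (\prod_(_ <= _ < _ | _) _)%N.
set C := Posz 'C(_, _).
set Q := Posz (\prod_(_ <= _ < _ | _) _)%N.
rewrite (_ : (-1) ^+ (b - b %/ p) * C * Q = C * ((-1) ^+ (b - b %/ p) * Q)); last by ring.
apply: modz_mul_cong => //.
exact: prod_neg.
Qed.

Definition G (K L : int) : int :=
  if 0 <= K then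
    (if 0 <= L then ('C(`|K| + `|L|, `|K|))%:Z
     else (-1) ^+ `|K| * ('C((`|L|).-1, `|K|))%:Z)
  else (if 0 <= L then (-1) ^+ `|L| * ('C((`|K|).-1, `|L|))%:Z else 0).

Lemma binomZ_G K L : binomZ (K + L) K = G K L.
Proof.
rewrite /binomZ /G.
case: K => a; case: L => b.
- rewrite !le0z_nat. done.
- rewrite le0z_nat /=. case: ifP => h.
  + have h1 : (absz (a%:Z + Negz b)%R < a)%N by lia.
    have h2 : (b < a)%N by lia.
    by rewrite !bin_small // mulr0.
  + have -> : (a%:Z - (a%:Z + Negz b) - 1) = b%:Z by lia.
    done.
- have hn : (0 <= Negz a) = false by [].
  rewrite hn le0z_nat /=.
  case: ifP => h.
    have h2 : ((absz (Negz a)).-1 < b)%N by lia.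
    by rewrite bin_small // mulr0.
  have -> : Negz a <= Negz a + b by lia.
  have -> : (Negz a + b - Negz a) = b%:Z by lia.
  by rewrite subn1.
- have hn : (0 <= Negz a) = false by [].
  have hm : (0 <= Negz b) = false by [].
  rewrite hn hm.
  have -> : (0 <= Negz a + Negz b) = false by lia.
  have -> : (Negz a <= Negz a + Negz b) = false by lia.
  done.
Qed.

Lemma sign_mod p r a : prime p -> (1 <= r)%N -> (p ^ r.-1 %| a)%N ->
  (((-1) ^+ (p * a) : int) = (-1) ^+ a %[mod (p ^ r)%N%:Z])%Z.
Proof.
move=> pp r1 hd; case: (even_prime pp) => [p2|op]; last first.
  by rewrite -signr_odd oddM op /= signr_odd.
subst p; rewrite -[(-1) ^+ (2 * a)]signr_odd oddM /= expr0.
case: r r1 hd => // -[_ _|r _ hd].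
  by rewrite -signr_odd; case: (odd a).
have ha : (2 %| a)%N by apply: dvdn_trans hd; rewrite /= expnS dvdn_mulr.
by move: ha; rewrite dvdn2 -signr_odd => /negbTE ->.
Qed.

Lemma binC' n m : 'C(n + m, n) = 'C(n + m, m).
Proof. by rewrite -{3}(addKn n m) bin_sub // leq_addr. Qed.

Lemma pNegz p a : (0 < p)%N -> p%:Z * Negz a = Negz (p * a.+1).-1.
Proof. by move=> p0; rewrite NegzE mulrN -PoszM NegzE prednK // muln_gt0 p0. Qed.

Lemma main_mod p r (K L : int) : prime p -> (1 <= r)%N -> (p ^ r.-1 %| absz K)%N ->
  (binomZ (p%:Z * K + L) (p%:Z * K) = binomZ (K + (L %/ p%:Z)%Z) K
   %[mod (p ^ r)%N%:Z])%Z.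
Proof.
move=> pp r1 hd; have p0 := prime_gt0 pp.
have hr : (p ^ r %| p * absz K)%N by rewrite -(prednK r1) expnS dvdn_pmul2l.
rewrite !binomZ_G /G.
case: K hd hr => a hd hr; case: L => b.
- rewrite -PoszM divz_nat !le0z_nat /= binC' binC'.
  exact: CL_mod.
- rewrite -PoszM divNz_nat // -NegzE le0z_nat /=.
  apply: modz_mul_cong; first exact: sign_mod.
  case: (ltnP b (p * a)) => h.
    rewrite !bin_small //; by rewrite ltn_divLR // mulnC.
  rewrite -(subnKC h) binC'; set J := (b - p * a)%N.
  rewrite mulnC divnMDl // binC' mulnC.
  exact: CL_mod.
- rewrite pNegz // divz_nat /=.
  case: (ltnP b (p * a.+1)) => h; last first.
    rewrite !bin_small ?mulr0 //; first by rewrite leq_divRL // mulnC.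
    by rewrite prednK ?muln_gt0 ?p0.
  have h2 := @CL2_mod p r a.+1 b pp hr h.
  rewrite subn1 /= subn1 /= in h2.
  rewrite -modzMmr h2 modzMmr; congr (_ %% _)%Z.
  set e := (b - b %/ p)%N; set f := (b %/ p)%N.
  have s : (-1) ^+ e * (-1) ^+ e = 1 :> int.
    by rewrite -exprD addnn -signr_odd odd_double.
  have -> : b = (e + f)%N by rewrite subnK // leq_div.
  rewrite exprD.
  transitivity (((-1) ^+ e * (-1) ^+ e) * ((-1) ^+ f * 'C(a, f)%:Z) : int); first by ring.
  by rewrite s mul1r.
- rewrite pNegz // divNz_nat // -NegzE.
Qed.

Lemma divz_negS (k : int) (d : nat) : (0 < d)%N ->
  ((- k - 1) %/ d%:Z)%Z = - (k %/ d%:Z)%Z - 1.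
Proof.
move=> d0; case: k => n.
- have -> : - n%:Z - 1 = Negz n by rewrite NegzE; lia.
  by rewrite divNz_nat // divz_nat; lia.
- have -> : - Negz n - 1 = n%:Z by rewrite NegzE; lia.
  by rewrite divz_nat divNz_nat //; lia.
Qed.

Theorem lemma5p5 (p : nat) (m1 m2 k : int) (r : nat) :
  prime p -> (1 <= r)%N ->
  (binomZ ((p ^ r)%N%:Z * m1 + (p ^ r)%N%:Z * m2 - k - 1) ((p ^ r)%N%:Z * m1)
   = binomZ ((p ^ r.-1)%N%:Z * m1 + (p ^ r.-1)%N%:Z * m2 - (k %/ p%:Z)%Z - 1)
            ((p ^ r.-1)%N%:Z * m1)
   %[mod (p ^ r)%N%:Z])%Z.
Proof.
move=> pp r1; have p0 := prime_gt0 pp.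
have hq : (p ^ r)%N%:Z = p%:Z * (p ^ r.-1)%N%:Z by rewrite -PoszM -expnS prednK.
set K := (p ^ r.-1)%N%:Z * m1.
set L := (p ^ r)%N%:Z * m2 - k - 1.
have hd : (p ^ r.-1 %| absz K)%N by rewrite abszM dvdn_mulr.
have h := @main_mod p r K L pp r1 hd.
have e1 : (p ^ r)%N%:Z * m1 = p%:Z * K by rewrite hq /K mulrA.
have e2 : (p ^ r)%N%:Z * m1 + (p ^ r)%N%:Z * m2 - k - 1 = p%:Z * K + L.
  by rewrite -e1 /L; ring.
have e3 : (L %/ p%:Z)%Z = (p ^ r.-1)%N%:Z * m2 - (k %/ p%:Z)%Z - 1.
  rewrite /L hq (_ : p%:Z * (p ^ r.-1)%N%:Z * m2 - k - 1 =
     ((p ^ r.-1)%N%:Z * m2) * p%:Z + (- k - 1)); last by ring.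
  rewrite divzMDl ?divz_negS //; last by rewrite eqz_nat -lt0n.
  ring.
rewrite e2 e1 h /K e3; congr (binomZ _ _ %% _)%Z; ring.
Qed.
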